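(* Let $A, E \in \mathbb{R}^{m\times n}$, $b, \epsilon \in \mathbb{R}^m$, and set $\tilde A = A+E$, $\tilde b = b+\epsilon$. Assume the noiseless system $Ax=b$ is consistent and let $x_{\rm LS} = A^\dagger b$. Let $(x_k)_{k\ge0}$ be the iterates of the randomized Kaczmarz algorithm applied to the doubly-noisy system $\tilde A x\approx \tilde b$, with starting point $x_0$ satisfying $x_0 - x_{\rm LS} \in \operatorname{range}(\tilde A^\top)$. Then for every $k\ge 0$, $$\mathbb{E}\|x_k - x_{\rm LS}\|^2 \le \left(1-\frac{1}{\tilde R}\right)^k \|x_0 - x_{\rm LS}\|^2 + \frac{\|E x_{\rm LS} - \epsilon\|^2}{\sigma_{\min}^2(\tilde A)},$$ where $\tilde R = \|\tilde A^\dagger\|^2\,\|\tilde A\|_F^2$.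
   Context: Norms of vectors are Euclidean; $\|M\|$ is the spectral norm, $\|M\|_F$ the Frobenius norm, $M^\dagger$ the Moore–Penrose pseudoinverse, and $\sigma_{\min}(M)$ the smallest nonzero singular value of $M$. The randomized Kaczmarz (RK) algorithm applied to a system $\tilde A x\approx \tilde b$ (with $\tilde A$ having nonzero rows $\tilde a_1^\top,\dots,\tilde a_m^\top$) generates, from a starting point $x_0$, the iterates $x_{k+1} = x_k - \frac{\tilde a_{i(k)}^\top x_k - \tilde b_{i(k)}}{\|\tilde a_{i(k)}\|^2}\tilde a_{i(k)}$, where the indices $i(k)$ are drawn independently with $\Pr[i(k)=i] = \|\tilde a_i\|^2/\|\tilde A\|_F^2$. The expectation is over these random indices. The doubly-noisy system need not be consistent. *)

(* Defs.v *)
From HB Require Import structures.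
From mathcomp Require Import all_boot all_order all_algebra.
From mathcomp Require Import boolp classical_sets reals.
Set Implicit Arguments. Unset Strict Implicit. Unset Printing Implicit Defensive.
Import Order.TTheory GRing.Theory Num.Theory.
Local Open Scope ring_scope.
Local Open Scope classical_set_scope.

Section Defs.
Variable R : realType.

Definition vnorm2 {n} (x : 'cV[R]_n) : R := \sum_i x i 0 ^+ 2.
Definition vnorm {n} (x : 'cV[R]_n) : R := Num.sqrt (vnorm2 x).

Definition frob2 {m n} (M : 'M[R]_(m, n)) : R := \sum_i \sum_j M i j ^+ 2.

Definition opnorm {m n} (M : 'M[R]_(m, n)) : R :=
  sup [set vnorm (M *m x) | x in [set x : 'cV[R]_n | vnorm x = 1]].

Definition penrose {m n} (M : 'M[R]_(m, n)) (P : 'M[R]_(n, m)) : Prop :=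
  [/\ M *m P *m M = M, P *m M *m P = P,
      (M *m P)^T = M *m P & (P *m M)^T = P *m M].
Definition pinv {m n} (M : 'M[R]_(m, n)) : 'M[R]_(n, m) :=
  xget 0 [set P | penrose M P].

Definition sigma_min {m n} (M : 'M[R]_(m, n)) : R :=
  Num.sqrt (inf [set l : R | 0 < l /\ eigenvalue (M^T *m M) l]).

Definition rownorm2 {m n} (M : 'M[R]_(m, n)) (i : 'I_m) : R :=
  \sum_j M i j ^+ 2.

Definition rk_step {m n} (At : 'M[R]_(m, n)) (bt : 'cV[R]_m) (i : 'I_m)
    (x : 'cV[R]_n) : 'cV[R]_n :=
  x - (((row i At *m x) 0 0 - bt i 0) / rownorm2 At i) *: (row i At)^T.

Definition rk_iter {m n} (At : 'M[R]_(m, n)) (bt : 'cV[R]_m)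
    (x0 : 'cV[R]_n) (s : seq 'I_m) : 'cV[R]_n :=
  foldl (fun x i => rk_step At bt i x) x0 s.

Definition rk_prob {m n} (At : 'M[R]_(m, n)) (i : 'I_m) : R :=
  rownorm2 At i / frob2 At.

(* expectation of f(x_k) over the i.i.d. random indices i(0), ..., i(k-1) *)
Definition rk_expect {m n} (At : 'M[R]_(m, n)) (bt : 'cV[R]_m)
    (x0 : 'cV[R]_n) (k : nat) (f : 'cV[R]_n -> R) : R :=
  \sum_(s : k.-tuple 'I_m)
     (\prod_(i <- s) rk_prob At i) * f (rk_iter At bt x0 s).

End Defs.

(* Main.v *)
Require Import Defs.
From HB Require Import structures.
From mathcomp Require Import all_boot all_order all_algebra.
From mathcomp Require Import boolp classical_sets reals.
Import Order.TTheory GRing.Theory Num.Theory.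
From mathcomp Require Import ring lra.
Set Implicit Arguments. Unset Strict Implicit. Unset Printing Implicit Defensive.
Local Open Scope ring_scope.



Section Basics.
Variable R : realType.

Definition dot n (u v : 'cV[R]_n) : R := \sum_i u i 0 * v i 0.

Lemma dotE n (u v : 'cV[R]_n) : dot u v = (u^T *m v) 0 0.
Proof. by rewrite mxE; apply: eq_bigr => i _; rewrite mxE. Qed.

Lemma vnorm2_dot n (u : 'cV[R]_n) : vnorm2 u = dot u u.
Proof. by apply: eq_bigr => i _; rewrite expr2. Qed.

Lemma dotC n (u v : 'cV[R]_n) : dot u v = dot v u.
Proof. by apply: eq_bigr => i _; rewrite mulrC. Qed.

Lemma dotDl n (u v w : 'cV[R]_n) : dot (u + v) w = dot u w + dot v w.
Proof. by rewrite /dot -big_split; apply: eq_bigr => i _; rewrite mxE mulrDl. Qed.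

Lemma dotDr n (u v w : 'cV[R]_n) : dot w (u + v) = dot w u + dot w v.
Proof. by rewrite dotC dotDl !(dotC w). Qed.

Lemma dotZl n a (u w : 'cV[R]_n) : dot (a *: u) w = a * dot u w.
Proof. by rewrite /dot mulr_sumr; apply: eq_bigr => i _; rewrite mxE mulrA. Qed.

Lemma dotZr n a (u w : 'cV[R]_n) : dot w (a *: u) = a * dot w u.
Proof. by rewrite dotC dotZl dotC. Qed.

Lemma dotNl n (u w : 'cV[R]_n) : dot (- u) w = - dot u w.
Proof. by rewrite -scaleN1r dotZl mulN1r. Qed.

Lemma dotNr n (u w : 'cV[R]_n) : dot w (- u) = - dot w u.
Proof. by rewrite dotC dotNl dotC. Qed.

Lemma dotBl n (u v w : 'cV[R]_n) : dot (u - v) w = dot u w - dot v w.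
Proof. by rewrite dotDl dotNl. Qed.

Lemma dotBr n (u v w : 'cV[R]_n) : dot w (u - v) = dot w u - dot w v.
Proof. by rewrite dotDr dotNr. Qed.

Lemma dot0l n (w : 'cV[R]_n) : dot 0 w = 0.
Proof. by rewrite /dot big1 // => i _; rewrite mxE mul0r. Qed.

Lemma dot0r n (w : 'cV[R]_n) : dot w 0 = 0.
Proof. by rewrite dotC dot0l. Qed.

Lemma dot_mul m n (M : 'M[R]_(m, n)) u v : dot u (M *m v) = dot (M^T *m u) v.
Proof. by rewrite !dotE trmx_mul trmxK mulmxA. Qed.

Lemma vnorm2_ge0 n (u : 'cV[R]_n) : 0 <= vnorm2 u.
Proof. by apply: sumr_ge0 => i _; rewrite sqr_ge0. Qed.

Lemma vnorm2_eq0 n (u : 'cV[R]_n) : vnorm2 u = 0 -> u = 0.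
Proof.
move=> /eqP; rewrite psumr_eq0; last by move=> i _; rewrite sqr_ge0.
move=> /allP H; apply/matrixP => i j; rewrite ord1 mxE.
by have := H i (mem_index_enum _); rewrite sqrf_eq0 => /eqP.
Qed.

Lemma vnorm2Z n a (u : 'cV[R]_n) : vnorm2 (a *: u) = a ^+ 2 * vnorm2 u.
Proof. by rewrite !vnorm2_dot dotZl dotZr mulrA expr2. Qed.

Lemma CS n (a b : 'cV[R]_n) : dot a b ^+ 2 <= vnorm2 a * vnorm2 b.
Proof.
have [b0|bn0] := eqVneq (vnorm2 b) 0.
  by rewrite (vnorm2_eq0 b0) dot0r expr0n /= mulr_ge0 ?vnorm2_ge0.
have bp : 0 < vnorm2 b by rewrite lt_neqAle eq_sym bn0 vnorm2_ge0.
set t := dot a b / vnorm2 b.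
have := vnorm2_ge0 (a - t *: b).
rewrite !vnorm2_dot dotBl !dotBr !dotZl !dotZr -!vnorm2_dot (dotC b a).
rewrite /t => H.
have : 0 <= vnorm2 b * (vnorm2 a - dot a b / vnorm2 b * dot a b -
       (dot a b / vnorm2 b * dot a b -
        dot a b / vnorm2 b * (dot a b / vnorm2 b * vnorm2 b))).
  by rewrite mulr_ge0 // ltW.
set d := dot a b; set va := vnorm2 a; set vb := vnorm2 b.
have -> : vb * (va - d / vb * d - (d / vb * d - d / vb * (d / vb * vb))) = vb * va - d ^+ 2.
  by field.
by rewrite subr_ge0 mulrC.
Qed.

Lemma mulmx_entry m n (M : 'M[R]_(m, n)) x i : (M *m x) i 0 = dot (row i M)^T x.
Proof. by rewrite mxE; apply: eq_bigr => j _; rewrite !mxE. Qed.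

Lemma CSmx m n (M : 'M[R]_(m, n)) x : vnorm2 (M *m x) <= frob2 M * vnorm2 x.
Proof.
rewrite /vnorm2 /frob2 mulr_suml; apply: ler_sum => i _.
rewrite mulmx_entry; apply: le_trans (CS _ _) _.
by apply: ler_wpM2r; [exact: vnorm2_ge0| rewrite /vnorm2; rewrite le_eqVlt; apply/orP; left; apply/eqP; apply: eq_bigr => j _; rewrite !mxE].
Qed.

End Basics.


Section Pinv.
Variable R : realType.

Lemma rv_norm0 n (u : 'rV[R]_n) : (u *m u^T) 0 0 = 0 -> u = 0.
Proof.
move=> H; have : vnorm2 u^T = 0 by rewrite vnorm2_dot dotE trmxK.
by move/vnorm2_eq0 => /(congr1 trmx); rewrite trmxK trmx0.
Qed.

Lemma gram_unit r n (F : 'M[R]_(r, n)) : row_free F -> F *m F^T \in unitmx.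
Proof.
move=> fF; rewrite -row_free_unit; apply: inj_row_free => x Hx.
have : (x *m F) *m (x *m F)^T = 0.
  by rewrite trmx_mul mulmxA -(mulmxA x) Hx mul0mx.
move=> /(congr1 (fun M : 'M[R]_1 => M 0 0)) /=; rewrite [in RHS]mxE => /rv_norm0 /eqP.
by rewrite mulmx_free_eq0 // => /eqP.
Qed.

Lemma penrose_ex m n (M : 'M[R]_(m, n)) : exists P, penrose M P.
Proof.
set C := col_base M; set F := row_base M.
have eM : C *m F = M by exact: mulmx_base.
have fF : row_free F by exact: row_base_free.
have fC : row_free C^T.
  by rewrite /row_free mxrank_tr; have := col_base_full M; rewrite /row_full.
clearbody C F.
set G1 := F *m F^T; set G2 := C^T *m C.
have u1 : G1 \in unitmx by exact: gram_unit.
have u2 : G2 \in unitmx by have := gram_unit fC; rewrite trmxK.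
have s1 : G1^T = G1 by rewrite /G1 trmx_mul trmxK.
have s2 : G2^T = G2 by rewrite /G2 trmx_mul trmxK.
exists (F^T *m invmx G1 *m invmx G2 *m C^T).
have MP : M *m (F^T *m invmx G1 *m invmx G2 *m C^T) = C *m invmx G2 *m C^T.
  have : (C *m F) *m (F^T *m invmx G1 *m invmx G2 *m C^T) = C *m invmx G2 *m C^T.
    by rewrite !mulmxA -(mulmxA C) -/G1 -(mulmxA C G1) mulmxV // mulmx1.
  by rewrite eM.
have PM : (F^T *m invmx G1 *m invmx G2 *m C^T) *m M = F^T *m invmx G1 *m F.
  have : (F^T *m invmx G1 *m invmx G2 *m C^T) *m (C *m F) = F^T *m invmx G1 *m F.
    rewrite !mulmxA -(mulmxA _ (C^T)) -/G2.
    by rewrite -(mulmxA _ (invmx G2)) mulVmx // mulmx1.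
  by rewrite eM.
split.
- rewrite MP; have : C *m invmx G2 *m C^T *m (C *m F) = C *m F.
    rewrite !mulmxA -(mulmxA _ (C^T)) -/G2.
    by rewrite -(mulmxA _ (invmx G2)) mulVmx // mulmx1.
  by rewrite eM.
- rewrite PM !mulmxA -(mulmxA _ F) -/G1 -(mulmxA _ G1) mulmxV // mulmx1.
  by [].
- by rewrite MP !trmx_mul trmxK trmx_inv s2 mulmxA.
- by rewrite PM !trmx_mul trmxK trmx_inv s1 mulmxA.
Qed.

Lemma pinvP m n (M : 'M[R]_(m, n)) : penrose M (pinv M).
Proof. by rewrite /pinv; apply: xgetPex; exact: penrose_ex. Qed.

End Pinv.


Section Mu.
Local Open Scope classical_set_scope.
Variable R : realType.

Lemma Vsub m n (At : 'M[R]_(m, n)) (u v : 'cV[R]_n) :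
  (u^T <= At)%MS -> (v^T <= At)%MS -> ((u - v)^T <= At)%MS.
Proof.
move=> hu hv; rewrite linearB /= addmx_sub //.
by rewrite -scaleN1r scalemx_sub.
Qed.

Lemma VZ m n (At : 'M[R]_(m, n)) a (u : 'cV[R]_n) :
  (u^T <= At)%MS -> ((a *: u)^T <= At)%MS.
Proof. by move=> hu; rewrite linearZ /= scalemx_sub. Qed.

Lemma VAt m n (At : 'M[R]_(m, n)) (z : 'cV[R]_m) : ((At^T *m z)^T <= At)%MS.
Proof. by rewrite trmx_mul trmxK submxMl. Qed.

Lemma normalize n (w : 'cV[R]_n) : vnorm2 w != 0 ->
  vnorm2 ((Num.sqrt (vnorm2 w))^-1 *: w) = 1.
Proof.
move=> h; rewrite vnorm2Z exprVn sqr_sqrtr ?vnorm2_ge0 // mulVf //.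
Qed.

Lemma mu_lemma m n (At : 'M[R]_(m, n)) : At != 0 ->
  exists mu, [/\ 0 < mu,
    (forall w, (w^T <= At)%MS -> mu * vnorm2 w <= vnorm2 (At *m w)),
    eigenvalue (At^T *m At) mu &
    (forall l, 0 < l -> eigenvalue (At^T *m At) l -> mu <= l)].
Proof.
move=> At0.
pose V (w : 'cV[R]_n) := (w^T <= At)%MS.
pose S := At^T *m At.
have sS : S^T = S by rewrite /S trmx_mul trmxK.
have QS w : vnorm2 (At *m w) = dot w (S *m w).
  by rewrite vnorm2_dot dot_mul dotC /S mulmxA.
have [w0 [Vw0 w0n]] : exists w0, V w0 /\ vnorm2 w0 != 0.
  have [i [j Hij]] : exists i j, At i j != 0.
    case: (pselect (exists i j, At i j != 0)) => // H; exfalso.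
    apply: (negP At0); apply/eqP/matrixP => i j; rewrite mxE.
    by apply/eqP/negPn/negP => h; apply: H; exists i, j.
  exists (row i At)^T; split; first by rewrite /V trmxK row_sub.
  apply/negP => /eqP /vnorm2_eq0 /matrixP /(_ j 0); rewrite !mxE => h.
  by move: Hij; rewrite h eqxx.
pose X := [set vnorm2 (At *m w) | w in [set w : 'cV[R]_n | V w /\ vnorm2 w = 1]].
have Xn : X !=set0.
  exists (vnorm2 (At *m ((Num.sqrt (vnorm2 w0))^-1 *: w0))).
  by exists ((Num.sqrt (vnorm2 w0))^-1 *: w0) => //; split; [exact: VZ|exact: normalize].
have Xlb : lbound X 0 by move=> _ [w _ <-]; exact: vnorm2_ge0.
have Xhl : has_lbound X by exists 0.
pose mu := inf X.
have mu0 : 0 <= mu by exact: lb_le_inf.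
have Ha w : V w -> mu * vnorm2 w <= vnorm2 (At *m w).
  move=> Vw; have [->|wn] := eqVneq (vnorm2 w) 0.
    by rewrite mulr0 vnorm2_ge0.
  set s := Num.sqrt (vnorm2 w).
  have s0 : 0 < s by rewrite sqrtr_gt0 lt_neqAle eq_sym wn vnorm2_ge0.
  have : mu <= vnorm2 (At *m (s^-1 *: w)).
    apply: ge_inf => //; exists (s^-1 *: w) => //; split; [exact: VZ|exact: normalize].
  rewrite -scalemxAr vnorm2Z exprVn -[vnorm2 w]sqr_sqrtr ?vnorm2_ge0 // -/s.
  by rewrite mulrC -ler_pdivlMr ?exprn_gt0 // mulrC.
pose T := S - mu%:M.
have sT : T^T = T by rewrite /T linearB /= sS tr_scalar_mx.
have phiE w : dot w (T *m w) = vnorm2 (At *m w) - mu * vnorm2 w.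
  by rewrite /T mulmxBl mul_scalar_mx dotBr dotZr QS vnorm2_dot.
have VT w : V w -> V (T *m w).
  move=> Vw; rewrite /T mulmxBl mul_scalar_mx; apply: Vsub; last exact: VZ.
  by rewrite /V /S -mulmxA VAt.
have [w [Vw wn Tw]] : exists w, [/\ V w, w != 0 & T *m w = 0].
  case: (pselect (exists w, [/\ V w, w != 0 & T *m w = 0])) => // H; exfalso.
  have Hn w : V w -> T *m w = 0 -> w = 0.
    move=> Vw Tw; apply/eqP; apply/negPn/negP => wn; apply: H; by exists w.
  set B := row_base At.
  have BAt : (B <= At)%MS by rewrite eq_row_base.
  have VB w : V w -> exists z, w^T = z *m B.
    move=> /submxP [D ->]; exists (D *m col_base At).
    by rewrite -mulmxA mulmx_base.
  have fBT : row_free (B *m T).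
    apply: inj_row_free => x Hx.
    have Vx : V (x *m B)^T by rewrite /V trmxK; exact: submx_trans (submxMl _ _) BAt.
    have : (x *m B)^T = 0.
      apply: Hn => //; rewrite -sT -trmx_mul -mulmxA Hx; exact: trmx0.
    move=> /(congr1 trmx); rewrite trmxK trmx0 => /eqP.
    by rewrite mulmx_free_eq0 ?row_base_free // => /eqP.
  have [Y HY] := row_freeP fBT.
  pose Mb := (Y *m B)^T.
  have HM w : V w -> w = Mb *m (T *m w).
    move=> /VB [z ez].
    have : w^T = w^T *m T *m (Y *m B).
      by rewrite ez -(mulmxA z B T) -(mulmxA z (B *m T)) (mulmxA (B *m T)) HY mul1mx.
    move=> /(congr1 trmx); rewrite trmxK => {1}->.
    by rewrite trmx_mul (trmx_mul w^T T) trmxK sT.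
  pose K := frob2 Mb.
  have K0 : 0 <= K by apply: sumr_ge0 => i _; apply: sumr_ge0 => j _; exact: sqr_ge0.
  pose c := frob2 At + 1.
  have Fr0 : 0 <= frob2 At by apply: sumr_ge0 => i _; apply: sumr_ge0 => j _; exact: sqr_ge0.
  have c0 : 0 < c by rewrite /c ltr_wpDl.
  have Hc v : V v -> dot v (T *m v) <= c * vnorm2 v.
    move=> Vv; rewrite phiE.
    have := CSmx At v; have := vnorm2_ge0 v; have := vnorm2_ge0 (At *m v).
    rewrite /c; nra.
  have Hphi w : V w -> vnorm2 (T *m w) <= c * dot w (T *m w).
    move=> Vw; set v := T *m w.
    have Vv : V v by exact: VT.
    set t := c^-1.
    have Vu : V (w - t *: v) by apply: Vsub => //; exact: VZ.
    have := Ha _ Vu; rewrite -subr_ge0 -phiE.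
    rewrite mulmxBr -scalemxAr dotBl !dotBr !dotZl !dotZr.
    have -> : dot w (T *m v) = vnorm2 v by rewrite dot_mul sT vnorm2_dot.
    rewrite -/v -vnorm2_dot.
    have Hb := Hc v Vv.
    have tc : t * c = 1 by rewrite mulVf // gt_eqF.
    have t0 : 0 < t by rewrite invr_gt0.
    have p0 := vnorm2_ge0 v.
    move: Hb; set b := dot v (T *m v); set p := vnorm2 v; set q := dot w v.
    move=> Hb Hu.
    have H3 : t * (t * b) <= t * (t * (c * p)).
      by rewrite ler_wpM2l ?ler_wpM2l // ltW.
    have H5 : t * (t * (c * p)) = t * p by rewrite (mulrA t c) tc mul1r.
    have H4 : 0 <= q - t * p by lra.
    have : c * (q - t * p) = c * q - p by rewrite mulrBr mulrA (mulrC c t) tc mul1r.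
    have := mulr_ge0 (ltW c0) H4; lra.
  pose d := (K * c + 1)^-1.
  have d0 : 0 < d by rewrite invr_gt0 ltr_wpDl // mulr_ge0 // ltW.
  have : mu + d <= mu.
    apply: lb_le_inf => // _ [v [Vv v1] <-].
    have h1 := HM v Vv.
    have h2 : 1 <= K * vnorm2 (T *m v) by rewrite -v1 {1}h1; exact: CSmx.
    have h3 := Hphi v Vv.
    have h4 : 0 <= dot v (T *m v) by rewrite phiE subr_ge0; exact: Ha.
    rewrite phiE v1 mulr1 in h3 h4.
    set q := vnorm2 (At *m v) - mu in h3 h4 *.
    have h5 : 1 <= (K * c) * q.
      apply: le_trans h2 _; rewrite -mulrA; exact: ler_wpM2l.
    have h6 : d * (K * c + 1) = 1 by rewrite mulVf // gt_eqF // ltr_wpDl // mulr_ge0 // ltW.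
    have h7 : d <= q.
      have : d * 1 <= d * ((K * c + 1) * q).
        apply: ler_wpM2l; first exact: ltW.
        rewrite mulrDl mul1r; lra.
      by rewrite mulr1 mulrA h6 mul1r.
    rewrite addrC -lerBrDr; exact: h7.
  lra.
have Sw : S *m w = mu *: w.
  by move/eqP: Tw; rewrite /T mulmxBl mul_scalar_mx subr_eq0 => /eqP.
have wn2 : vnorm2 w != 0 by apply/negP => /eqP /vnorm2_eq0 /eqP; apply/negP.
have wp : 0 < vnorm2 w by rewrite lt_neqAle eq_sym wn2 vnorm2_ge0.
have wTn : w^T != 0 by apply/negP => /eqP /(congr1 trmx); rewrite trmxK trmx0; apply/eqP.
exists mu; split.
- rewrite lt_neqAle mu0 andbT; apply/negP => /eqP mu_0.
  move: Vw => /submxP [D eD].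
  have : vnorm2 (At *m w) = 0 by rewrite QS Sw -mu_0 scale0r dot0r.
  move=> /vnorm2_eq0 Aw.
  have : vnorm2 w = 0.
    rewrite vnorm2_dot dotE eD -mulmxA Aw mulmx0 mxE; done.
  by move/eqP; rewrite (negbTE wn2).
- exact: Ha.
- apply/eigenvalueP; exists w^T => //.
  by rewrite -/S -sS -trmx_mul Sw linearZ.
- move=> l l0 /eigenvalueP [v vS vn].
  set u := v^T.
  have Su : S *m u = l *: u by rewrite /u -{1}sS -trmx_mul -/S vS linearZ.
  have Vu : V u.
    have -> : u = l^-1 *: (S *m u) by rewrite Su scalerA mulVf ?gt_eqF // scale1r.
    by apply: VZ; rewrite /V /S -mulmxA VAt.
  have un : vnorm2 u != 0.
    apply/negP => /eqP /vnorm2_eq0 /(congr1 trmx); rewrite trmxK trmx0 => v0.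
    by move: vn; rewrite v0 eqxx.
  have up : 0 < vnorm2 u by rewrite lt_neqAle eq_sym un vnorm2_ge0.
  have := Ha u Vu; rewrite QS Su dotZr -vnorm2_dot.
  by rewrite ler_pM2r.
Qed.
End Mu.


Section Expect.
Variable R : realType.
Variables (m n : nat) (At : 'M[R]_(m, n)) (bt : 'cV[R]_m).

Lemma E0 x0 f : rk_expect At bt x0 0 f = f x0.
Proof.
rewrite /rk_expect (big_pred1 [tuple]) => [|s]; last by apply/esym/eqP; exact: tuple0.
by rewrite big_nil mul1r.
Qed.

Lemma tuple_sum k (F : k.+1.-tuple 'I_m -> R) :
  \sum_(s : k.+1.-tuple 'I_m) F s = \sum_i \sum_(t : k.-tuple 'I_m) F [tuple of i :: t].
Proof.
rewrite pair_bigA /=.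
rewrite (reindex (fun p : 'I_m * k.-tuple 'I_m => [tuple of p.1 :: p.2])) //=.
exists (fun s : k.+1.-tuple 'I_m => (thead s, [tuple of behead s])).
  by move=> [i t] _ /=; rewrite theadE; congr pair; apply: val_inj.
by move=> s _ /=; rewrite [RHS]tuple_eta.
Qed.

Lemma Econs x0 k f : rk_expect At bt x0 k.+1 f =
  \sum_i rk_prob At i * rk_expect At bt (rk_step At bt i x0) k f.
Proof.
rewrite /rk_expect tuple_sum; apply: eq_bigr => i _.
rewrite mulr_sumr; apply: eq_bigr => t _.
by rewrite big_cons mulrA.
Qed.

Lemma Ercons k : forall x0 f, rk_expect At bt x0 k.+1 f =
  rk_expect At bt x0 k (fun x => \sum_i rk_prob At i * f (rk_step At bt i x)).
Proof.
elim: k => [|k IH] x0 f.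
  by rewrite Econs E0; apply: eq_bigr => i _; rewrite E0.
by rewrite Econs [RHS]Econs; apply: eq_bigr => i _; rewrite IH.
Qed.

Lemma prob_ge0 i : 0 <= rk_prob At i.
Proof.
rewrite /rk_prob divr_ge0 //; first by apply: sumr_ge0 => j _; exact: sqr_ge0.
by apply: sumr_ge0 => i' _; apply: sumr_ge0 => j _; exact: sqr_ge0.
Qed.

Lemma Emono x0 k (g h : 'cV[R]_n -> R) :
  (forall s : k.-tuple 'I_m, g (rk_iter At bt x0 s) <= h (rk_iter At bt x0 s)) ->
  rk_expect At bt x0 k g <= rk_expect At bt x0 k h.
Proof.
move=> H; apply: ler_sum => s _; apply: ler_wpM2l => //.
by apply: prodr_ge0 => i _; exact: prob_ge0.
Qed.

Lemma Elin x0 k (f : 'cV[R]_n -> R) a c :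
  rk_expect At bt x0 k (fun x => a * f x + c) =
  a * rk_expect At bt x0 k f + c * rk_expect At bt x0 k (fun _ => 1).
Proof.
rewrite /rk_expect mulr_sumr mulr_sumr -big_split; apply: eq_bigr => s _ /=.
by rewrite mulrDr mulr1 mulrCA (mulrC c).
Qed.

Lemma E1 x0 k : \sum_i rk_prob At i = 1 -> rk_expect At bt x0 k (fun _ => 1) = 1.
Proof.
move=> Hp; elim: k x0 => [|k IH] x0; first by rewrite E0.
rewrite Ercons -[RHS](IH x0); apply: eq_bigr => s _; congr (_ * _).
by rewrite /=; under eq_bigr do rewrite mulr1; exact: Hp.
Qed.

End Expect.


Section Step.
Variable R : realType.
Variables (m n : nat) (At : 'M[R]_(m, n)) (bt : 'cV[R]_m).

Lemma frob2_rows : frob2 At = \sum_i rownorm2 At i.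
Proof. by []. Qed.

Lemma rownorm2_vn i : rownorm2 At i = vnorm2 (row i At)^T.
Proof. by apply: eq_bigr => j _; rewrite !mxE. Qed.

Lemma step_sum (xs x : 'cV[R]_n) :
  (forall i, rownorm2 At i != 0) -> frob2 At != 0 ->
  \sum_i rk_prob At i * vnorm2 (rk_step At bt i x - xs) =
  vnorm2 (x - xs) - vnorm2 (At *m (x - xs)) / frob2 At
  + vnorm2 (bt - At *m xs) / frob2 At.
Proof.
move=> Hn HF; set e := x - xs; set F := frob2 At.
have key i : rk_prob At i * vnorm2 (rk_step At bt i x - xs) =
    rownorm2 At i / F * vnorm2 e + (bt - At *m xs) i 0 ^+ 2 / F
    - (At *m e) i 0 ^+ 2 / F.
  set a := (row i At)^T.
  have ea : rk_step At bt i x - xs =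
     e - (((At *m e) i 0 - (bt - At *m xs) i 0) / rownorm2 At i) *: a.
    rewrite /rk_step /e addrAC -/a; congr (_ - _ *: _); congr (_ / _).
    rewrite -row_mul mxE mulmxBr !mxE; ring.
  rewrite ea; clearbody e; rewrite vnorm2_dot dotBl !dotBr !dotZl !dotZr -!vnorm2_dot.
  rewrite /a (dotC e (row i At)^T) -mulmx_entry -rownorm2_vn /rk_prob -/F.
  set d := (At *m e) i 0; set r := (bt - At *m xs) i 0; set nn := rownorm2 At i.
  have := Hn i; rewrite -/nn => Hnn.
  field; apply/andP; split => //.
rewrite (eq_bigr _ (fun i _ => key i)) !big_split /=.
rewrite -!mulr_suml -frob2_rows -/F mulfV // mul1r.
rewrite sumrN -mulr_suml; rewrite /vnorm2; lra.
Qed.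

End Step.


Lemma invariance (R : realType) m n (At : 'M[R]_(m, n)) bt (xs : 'cV[R]_n) :
  forall (s : seq 'I_m) x, ((x - xs)^T <= At)%MS ->
  ((rk_iter At bt x s - xs)^T <= At)%MS.
Proof.
elim=> [|i s IH] x Vx //=.
apply: IH; rewrite /rk_step addrAC; apply: Vsub => //; apply: VZ.
by rewrite trmxK row_sub.
Qed.

Lemma vnorm2N (R : realType) n (v : 'cV[R]_n) : vnorm2 (- v) = vnorm2 v.
Proof. by rewrite !vnorm2_dot dotNl dotNr opprK. Qed.

Unset Implicit Arguments.
Theorem theorem3p1 (R : realType) (m n : nat)
    (A E : 'M[R]_(m, n)) (b eps : 'cV[R]_m) (x0 : 'cV[R]_n)
    (hrows : forall i : 'I_m, row i (A + E) != 0)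
    (hcons : exists x : 'cV[R]_n, A *m x = b)
    (hx0 : ((x0 - pinv A *m b)^T <= (A + E)%R)%MS)
    (k : nat) :
  let At := A + E in
  let bt := b + eps in
  let xLS := pinv A *m b in
  rk_expect At bt x0 k (fun x => vnorm2 (x - xLS))
  <= (1 - (opnorm (pinv At) ^+ 2 * frob2 At)^-1) ^+ k * vnorm2 (x0 - xLS)
     + vnorm2 (E *m xLS - eps) / sigma_min At ^+ 2.
Proof.
cbv zeta; set At := A + E; set bt := b + eps; set xLS := pinv A *m b.
have T2 : 0 <= vnorm2 (E *m xLS - eps) / sigma_min At ^+ 2.
  by rewrite divr_ge0 ?vnorm2_ge0 ?sqr_ge0.
have [m0|mpos] := posnP m.
  subst m; case: k => [|k].
    rewrite E0 expr0 mul1r lerDl; exact: T2.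
  rewrite /rk_expect big1; last by move=> s _; case: (thead s).
  have -> : frob2 At = 0 by rewrite /frob2 big_ord0.
  by rewrite mulr0 invr0 subr0 expr1n mul1r addr_ge0 ?vnorm2_ge0.
pose i0 := Ordinal mpos.
have Hrow i : rownorm2 At i != 0.
  rewrite rownorm2_vn; apply/negP => /eqP /vnorm2_eq0 /(congr1 trmx).
  by rewrite trmxK trmx0 => h; move: (hrows i); rewrite -/At h eqxx.
have F0 : 0 <= frob2 At by apply: sumr_ge0 => i _; apply: sumr_ge0 => j _; exact: sqr_ge0.
have rn0 i : 0 <= rownorm2 At i by apply: sumr_ge0 => j _; exact: sqr_ge0.
have Fn : frob2 At != 0.
  rewrite frob2_rows psumr_eq0 //; apply/negP => /allP /(_ i0 (mem_index_enum _)).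
  by rewrite /= (negbTE (Hrow i0)).
have Fp : 0 < frob2 At by rewrite lt_neqAle eq_sym Fn F0.
have Hp : \sum_i rk_prob At i = 1.
  by rewrite /rk_prob -mulr_suml -frob2_rows mulfV.
have At0 : At != 0.
  apply/negP => /eqP h; move: (hrows i0); rewrite -/At h.
  by apply/negP; rewrite negbK; apply/eqP/matrixP => i j; rewrite !mxE.
have [PA1 _ _ _] := pinvP A.
have [PT1 PT2 PT3 PT4] := pinvP At.
set P := pinv At in PT1 PT2 PT3 PT4 *.
have hA : A *m xLS = b.
  by case: hcons => x hx; rewrite /xLS -hx !mulmxA PA1.

have hr : vnorm2 (bt - At *m xLS) = vnorm2 (E *m xLS - eps).
  rewrite -vnorm2N; congr vnorm2.
  by rewrite /bt /At mulmxDl hA; apply/matrixP => i j; rewrite !mxE; ring.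
have [mu [mu0 Hmu eigmu mumin]] := mu_lemma At0.
have sig : sigma_min At ^+ 2 = mu.
  rewrite /sigma_min sqr_sqrtr; last first.
    apply: lb_le_inf; first by exists mu.
    by move=> l [l0 _]; exact: ltW.
  apply/eqP; rewrite eq_le; apply/andP; split.
    by apply: ge_inf; [exists 0 => l [l0 _]; exact: ltW| split].
  by apply: lb_le_inf; [exists mu| move=> l [l0 el]; exact: mumin].
have PV y : ((P *m y)^T <= At)%MS.
  have -> : (P *m y)^T = (y^T *m P^T *m P) *m At.
    by rewrite -!mulmxA -PT4 -trmx_mul PT2 trmx_mul.
  exact: submxMl.
have Qb y : vnorm2 (At *m (P *m y)) <= vnorm2 y.
  set Q := At *m P.
  have sQ : Q^T = Q by exact: PT3.
  have QQ : Q *m Q = Q by rewrite /Q mulmxA PT1.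
  have e1 : vnorm2 (Q *m y) = dot y (Q *m y).
    by rewrite vnorm2_dot dot_mul dotC sQ mulmxA QQ.
  have := vnorm2_ge0 (y - Q *m y).
  rewrite vnorm2_dot dotBl !dotBr -!vnorm2_dot (dotC (Q *m y) y) -e1 mulmxA.
  lra.
have bnd y : mu * vnorm2 (P *m y) <= vnorm2 y.
  apply: le_trans (Qb y); exact: Hmu.
pose Z := [set vnorm (P *m y) | y in [set y : 'cV[R]_m | vnorm y = 1]]%classic.
have vn1 (y : 'cV[R]_m) : vnorm y = 1 -> vnorm2 y = 1.
  by move=> h; rewrite -(sqr_sqrtr (vnorm2_ge0 y)) -/(vnorm y) h expr1n.
have ubZ : ubound Z (Num.sqrt mu^-1).
  move=> _ [y yy <-]; rewrite /vnorm ler_sqrt ?invr_ge0 ?(ltW mu0) //.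
  have := bnd y; rewrite (vn1 y yy) => h.
  by rewrite -(ler_pM2l mu0) mulfV ?gt_eqF.
have Zn : exists z, Z z.
  pose yy := (const_mx 1 : 'cV[R]_m).
  have yyn : vnorm2 yy != 0.
    rewrite /vnorm2 (eq_bigr (fun _ => 1)) => [|i _]; last by rewrite mxE expr1n.
    by rewrite sumr_const card_ord pnatr_eq0 -lt0n.
  exists (vnorm (P *m ((Num.sqrt (vnorm2 yy))^-1 *: yy))).
  by exists ((Num.sqrt (vnorm2 yy))^-1 *: yy) => //=; rewrite /vnorm normalize // sqrtr1.
have hsZ : has_sup Z by split => //; exists (Num.sqrt mu^-1).
set o := opnorm P.
have oE : o = sup Z by [].
have o0 : 0 <= o.
  have [z [y yy ez]] := Zn.
  have z0 : 0 <= z by rewrite -ez; exact: sqrtr_ge0.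
  apply: le_trans z0 _; rewrite oE; apply: sup_upper_bound => //.
  by rewrite -ez; exists y.
have omu : o ^+ 2 <= mu^-1.
  have : o <= Num.sqrt mu^-1 by rewrite oE; exact: ge_sup.
  move=> h; have := @lerXn2r R 2 o (Num.sqrt mu^-1).
  rewrite sqr_sqrtr ?invr_ge0 ?(ltW mu0) //; apply => //; by rewrite nnegrE ?sqrtr_ge0.
have opb v : vnorm2 (P *m v) <= o ^+ 2 * vnorm2 v.
  have [v0|vn] := eqVneq (vnorm2 v) 0.
    by rewrite (vnorm2_eq0 v0) mulmx0 !vnorm2_dot !dot0l mulr0.
  set sv := Num.sqrt (vnorm2 v).
  have sv0 : 0 < sv by rewrite sqrtr_gt0 lt_neqAle eq_sym vn vnorm2_ge0.
  have : vnorm (P *m (sv^-1 *: v)) <= o.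
    rewrite oE; apply: sup_upper_bound => //; exists (sv^-1 *: v) => //=.
    by rewrite /vnorm /sv normalize // sqrtr1.
  rewrite /vnorm -scalemxAr vnorm2Z => h.
  have h2 : sv^-1 ^+ 2 * vnorm2 (P *m v) <= o ^+ 2.
    have := @lerXn2r R 2 _ o (sqrtr_ge0 (sv^-1 ^+ 2 * vnorm2 (P *m v))) o0 h.
    by rewrite sqr_sqrtr // mulr_ge0 ?sqr_ge0 ?vnorm2_ge0.
  move: h2; rewrite exprVn -[vnorm2 v](sqr_sqrtr (vnorm2_ge0 v)) -/sv.
  by move=> h2; rewrite -ler_pdivrMr ?exprn_gt0 // mulrC.
have F6 e : (e^T <= At)%MS -> vnorm2 e <= o ^+ 2 * vnorm2 (At *m e).
  move=> /submxP [D eD].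
  have ee : e = At^T *m D^T by rewrite -trmx_mul -eD trmxK.
  have : P *m (At *m e) = e.
    rewrite ee !mulmxA -PT4 -trmx_mul mulmxA PT1 //.
  move=> h; rewrite -{1}h; exact: opb.
have o2p : 0 < o ^+ 2 * frob2 At.
  have := F6 (row i0 At)^T; rewrite trmxK row_sub => /(_ isT) h.
  have h2 := CSmx At (row i0 At)^T.
  have hp : 0 < vnorm2 (row i0 At)^T.
    by rewrite -rownorm2_vn lt_neqAle eq_sym Hrow rn0.
  have o20 : 0 <= o ^+ 2 by exact: sqr_ge0.
  have : vnorm2 (row i0 At)^T <= (o ^+ 2 * frob2 At) * vnorm2 (row i0 At)^T.
    apply: le_trans h _; rewrite -mulrA; exact: ler_wpM2l.
  rewrite -{1}(mul1r (vnorm2 _)) ler_pM2r // => h1.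
  by apply: lt_le_trans h1.
have o1 : 1 <= o ^+ 2 * frob2 At.
  have := F6 (row i0 At)^T; rewrite trmxK row_sub => /(_ isT) h.
  have h2 := CSmx At (row i0 At)^T.
  have hp : 0 < vnorm2 (row i0 At)^T.
    by rewrite -rownorm2_vn lt_neqAle eq_sym Hrow rn0.
  have o20 : 0 <= o ^+ 2 by exact: sqr_ge0.
  have : vnorm2 (row i0 At)^T <= (o ^+ 2 * frob2 At) * vnorm2 (row i0 At)^T.
    apply: le_trans h _; rewrite -mulrA; exact: ler_wpM2l.
  by rewrite -{1}(mul1r (vnorm2 _)) ler_pM2r.
set q := 1 - (o ^+ 2 * frob2 At)^-1.
have q0 : 0 <= q by rewrite subr_ge0 invf_le1.
set c := vnorm2 (bt - At *m xLS) / frob2 At.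
set N := o ^+ 2 * vnorm2 (bt - At *m xLS).
have N0 : 0 <= N by rewrite mulr_ge0 ?sqr_ge0 ?vnorm2_ge0.
have NE : q * N + c = N.
  rewrite /q /N /c; have := Fn; have : o ^+ 2 != 0.
    by apply/negP => /eqP h; move: o2p; rewrite h mul0r ltxx.
  move=> h1 h2; field; rewrite h2 /=; by apply: contra h1 => /eqP ->; rewrite expr0n.
have Gb x : ((x - xLS)^T <= At)%MS ->
   \sum_i rk_prob At i * vnorm2 (rk_step At bt i x - xLS) <= q * vnorm2 (x - xLS) + c.
  move=> Vx; rewrite step_sum // -/c lerD2r /q mulrBl mul1r lerD2l lerN2.
  have := F6 _ Vx; set ee := vnorm2 (x - xLS); set ae := vnorm2 (At *m (x - xLS)).
  move=> h; apply: le_trans (ler_wpM2l _ h) _; first by rewrite invr_ge0 ltW.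
  have on : o != 0 by apply/negP => /eqP h0; move: o2p; rewrite h0 expr0n mul0r ltxx.
  rewrite le_eqVlt; apply/orP; left; apply/eqP; field; by rewrite Fn on.
have main j : rk_expect At bt x0 j (fun x => vnorm2 (x - xLS)) <=
    q ^+ j * vnorm2 (x0 - xLS) + N.
  elim: j => [|j IH]; first by rewrite E0 expr0 mul1r lerDl.
  rewrite Ercons.
  apply: le_trans (@Emono _ _ _ _ _ _ _ _ (fun x => q * vnorm2 (x - xLS) + c) _) _.
    by move=> s; apply: Gb; apply: invariance.
  rewrite Elin E1 // mulr1 -NE addrA lerD2r exprS -mulrA -mulrDr.
  exact: ler_wpM2l.
apply: le_trans (main k) _; rewrite lerD2l /N sig -hr mulrC.
by apply: ler_wpM2l; [exact: vnorm2_ge0|exact: omu].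
Qed.
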